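(* Let $f\in H^2(\mathbb{D})$. Then $|\langle f,e_{n,a}\rangle|\to 0$ as $n\to\infty$, uniformly in $a\in\mathbb{D}$; that is, for every $\varepsilon>0$ there is $N$ such that $|\langle f,e_{n,a}\rangle|<\varepsilon$ for all $n>N$ and all $a\in\mathbb{D}$.
   Context: $\mathbb{D}$ is the open unit disc; $H^2(\mathbb{D})$ the Hardy space with inner product $\langle f,g\rangle=\frac{1}{2\pi}\int_0^{2\pi}f(e^{it})\overline{g(e^{it})}\,dt$. For $n\in\mathbb{N}$ and $a\in\mathbb{D}$, $k_{n,a}(z)=\left(\frac{\partial}{\partial\overline{a}}\right)^n\frac{1}{1-\overline{a}z}=\frac{n!\,z^n}{(1-\overline{a}z)^{n+1}}$ and $e_{n,a}=k_{n,a}/\|k_{n,a}\|$. *)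

(* Defs.v *)
From Stdlib Require Import Reals ClassicalEpsilon Factorial.
From Coquelicot Require Import Coquelicot.
Open Scope R_scope.

Definition cis (t : R) : C := (cos t, sin t).

Definition holo_disc (f : C -> C) : Prop :=
  exists c : nat -> C, forall z : C, Cmod z < 1 ->
    is_series (fun n => (c n * z ^ n)%C) (f z).

Definition CRInt (F : R -> C) (a b : R) : C :=
  (RInt (fun t => fst (F t)) a b, RInt (fun t => snd (F t)) a b).

Definition H2 (f : C -> C) : Prop :=
  holo_disc f /\
  exists M : R, forall r : R, 0 <= r < 1 ->
    / (2 * PI) * RInt (fun t => (Cmod (f (RtoC r * cis t)%C)) ^ 2) 0 (2 * PI) <= M.

Definition inner_r (f g : C -> C) (r : R) : C :=
  (RtoC (/ (2 * PI)) *
   CRInt (fun t => f (RtoC r * cis t)%C * Cconj (g (RtoC r * cis t)%C))%C 0 (2 * PI))%C.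

(* <f,g> = (1/2pi) int_0^{2pi} f(e^{it}) conj(g(e^{it})) dt, boundary values
   being radial limits: the limit of inner_r f g r as r -> 1^- *)
Definition hinner (f g : C -> C) : C :=
  epsilon (inhabits (RtoC 0))
    (fun l : C => filterlim (inner_r f g) (at_left 1) (locally l)).

Definition hnorm (f : C -> C) : R := sqrt (fst (hinner f f)).

Definition k_na (n : nat) (a : C) (z : C) : C :=
  (RtoC (INR (fact n)) * z ^ n / (1 - Cconj a * z) ^ (S n))%C.

Definition e_na (n : nat) (a : C) (z : C) : C :=
  (k_na n a z / RtoC (hnorm (k_na n a)))%C.

(* Main.v *)
Require Import Defs.
From Stdlib Require Import Reals.
From Coquelicot Require Import Coquelicot.
From Stdlib Require Import Lra Lia ClassicalEpsilon Factorial.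
Open Scope R_scope.


Definition Clim (u : nat -> C) (l : C) : Prop :=
  forall eps, 0 < eps -> exists N, forall n, (N <= n)%nat -> Cmod (u n - l) < eps.

Lemma sum_n_S_C (a : nat -> C) n : sum_n a (S n) = (sum_n a n + a (S n))%C.
Proof. rewrite sum_Sn. reflexivity. Qed.

Lemma sum_n_O_C (a : nat -> C) : sum_n a O = a O.
Proof. apply sum_O. Qed.

Lemma Clim_filterlim (u : nat -> C) l :
  Clim u l <-> filterlim u eventually (locally (T := C_UniformSpace) l).
Proof.
  split.
  - intros H. apply (filterlim_locally (U := C_UniformSpace)). intros eps.
    destruct (H eps (cond_pos eps)) as [N HN]. exists N. intros n Hn.
    apply (norm_compat1 (V := C_NormedModule)). apply HN; lia.
  - intros H eps Heps.
    assert (H2 : 0 < eps / 2) by lra.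
    destruct ((proj1 (filterlim_locally (U := C_UniformSpace) u l)) H (mkposreal _ H2)) as [N HN].
    exists N. intros n Hn. specialize (HN n Hn).
    pose proof (norm_compat2 (V := C_NormedModule) l (u n) (mkposreal _ H2) HN) as H3.
    simpl in H3. change (norm_factor (V := C_NormedModule)) with (sqrt 2) in H3.
    assert (sqrt 2 < 2).
    { rewrite <- (sqrt_square 2) at 2 by lra. apply sqrt_lt_1; lra. }
    change (Cmod (u n - l) < eps). 
    eapply Rlt_le_trans. exact H3. nra.
Qed.

Lemma Clim_series (a : nat -> C) l : Clim (sum_n a) l <-> is_series a l.
Proof. apply Clim_filterlim. Qed.

Ltac Ceq := match goal with |- @eq _ ?x ?y => change (@eq C x y) end.

Lemma Cmod_sub_sym (a b : C) : Cmod (a - b) = Cmod (b - a).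
Proof. replace (a - b)%C with (- (b - a))%C by ring. apply Cmod_opp. Qed.

Lemma Cmod_tri3 (a b c : C) : Cmod (a - c) <= Cmod (a - b) + Cmod (b - c).
Proof. replace (a - c)%C with ((a - b) + (b - c))%C by ring. apply Cmod_triangle. Qed.

Lemma Clim_le (u : nat -> C) l x B :
  Clim u l -> (exists N, forall n, (N <= n)%nat -> Cmod (u n - x) <= B) -> Cmod (l - x) <= B.
Proof.
  intros Hu [N HN].
  apply Rnot_gt_le; intro Hc.
  destruct (Hu (Cmod (l - x) - B)) as [M HM]; [lra|].
  specialize (HM (max N M) ltac:(lia)). specialize (HN (max N M) ltac:(lia)).
  pose proof (Cmod_tri3 l (u (max N M)) x). rewrite Cmod_sub_sym in HM. lra.
Qed.

Lemma Clim_unique u l1 l2 : Clim u l1 -> Clim u l2 -> l1 = l2.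
Proof.
  intros H1 H2.
  assert (H : Cmod (l1 - l2) <= 0).
  { apply Rnot_gt_le; intro Hc.
    destruct (H1 (Cmod (l1 - l2) / 2)) as [N1 HN1]; [lra|].
    destruct (H2 (Cmod (l1 - l2) / 2)) as [N2 HN2]; [lra|].
    specialize (HN1 (max N1 N2) ltac:(lia)). specialize (HN2 (max N1 N2) ltac:(lia)).
    pose proof (Cmod_tri3 l1 (u (max N1 N2)) l2). rewrite Cmod_sub_sym in HN1. lra. }
  pose proof (Cmod_ge_0 (l1 - l2)).
  assert (Cmod (l1 - l2) = 0) by lra.
  apply Cmod_eq_0 in H3. replace l1 with ((l1 - l2) + l2)%C by ring. rewrite H3. ring.
Qed.

Lemma Clim_ext u v l : (exists N, forall n, (N <= n)%nat -> u n = v n) -> Clim u l -> Clim v l.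
Proof.
  intros [N HN] Hu eps Heps. destruct (Hu eps Heps) as [M HM].
  exists (max N M). intros n Hn. rewrite <- HN by lia. apply HM; lia.
Qed.

Lemma Clim_const c : Clim (fun _ => c) c.
Proof. intros eps Heps. exists O. intros. replace (c - c)%C with (RtoC 0) by ring. rewrite Cmod_0. lra. Qed.

Lemma Clim_plus u v l k : Clim u l -> Clim v k -> Clim (fun n => u n + v n)%C (l + k)%C.
Proof.
  intros Hu Hv eps Heps.
  destruct (Hu (eps/2)) as [N1 H1]; [lra|]. destruct (Hv (eps/2)) as [N2 H2]; [lra|].
  exists (max N1 N2). intros n Hn.
  replace (u n + v n - (l + k))%C with ((u n - l) + (v n - k))%C by ring.
  eapply Rle_lt_trans. apply Cmod_triangle.
  specialize (H1 n ltac:(lia)). specialize (H2 n ltac:(lia)). lra.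
Qed.

Lemma Clim_scal K u l : Clim u l -> Clim (fun n => K * u n)%C (K * l)%C.
Proof.
  intros Hu eps Heps.
  destruct (Hu (eps / (Cmod K + 1))) as [N HN].
  { apply Rdiv_lt_0_compat; [lra|]. pose proof (Cmod_ge_0 K). lra. }
  exists N. intros n Hn. specialize (HN n Hn).
  replace (K * u n - K * l)%C with (K * (u n - l))%C by ring.
  rewrite Cmod_mult. pose proof (Cmod_ge_0 K). pose proof (Cmod_ge_0 (u n - l)).
  apply Rmult_lt_compat_l with (r := Cmod K + 1) in HN; [|lra].
  replace ((Cmod K + 1) * (eps / (Cmod K + 1))) with eps in HN by (field; lra).
  nra.
Qed.

Lemma Clim_opp u l : Clim u l -> Clim (fun n => - u n)%C (- l)%C.
Proof.
  intros H. apply (Clim_ext (fun n => (-1) * u n)%C). exists O; intros; ring.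
  replace (- l)%C with ((-1) * l)%C by ring. apply Clim_scal; auto.
Qed.

Lemma Clim_minus u v l k : Clim u l -> Clim v k -> Clim (fun n => u n - v n)%C (l - k)%C.
Proof. intros. apply Clim_plus; auto. apply Clim_opp; auto. Qed.

Lemma Clim_to0 u : (forall eps, 0 < eps -> exists N, forall n, (N <= n)%nat -> Cmod (u n) < eps) -> Clim u 0.
Proof. intros H eps Heps. destruct (H eps Heps) as [N HN]. exists N. intros n Hn.
  replace (u n - 0)%C with (u n) by ring. auto. Qed.

Lemma Clim_fst u l : Clim u l -> Un_cv (fun n => fst (u n)) (fst l).
Proof.
  intros H eps Heps. destruct (H eps Heps) as [N HN]. exists N. intros n Hn.
  unfold R_dist. eapply Rle_lt_trans; [|apply (HN n); lia].
  eapply Rle_trans; [|apply Rmax_Cmod]. simpl. apply Rmax_l.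
Qed.


Lemma Cmod_pow (z : C) n : Cmod (z ^ n) = Cmod z ^ n.
Proof. induction n; simpl. apply Cmod_1. rewrite Cmod_mult, IHn. ring. Qed.

Lemma Cmod_RtoC_pos x : 0 <= x -> Cmod (RtoC x) = x.
Proof. intros. rewrite Cmod_R. apply Rabs_pos_eq; auto. Qed.

Lemma ident_geo (beta B : nat -> R) (w : C) :
  B O = beta O -> (forall j, B (S j) = B j + beta (S j)) ->
  forall N, ((1 - w) * sum_n (fun j => RtoC (B j) * w ^ j) N =
    sum_n (fun j => RtoC (beta j) * w ^ j) N - RtoC (B N) * w ^ (S N))%C.
Proof.
  intros H0 HS N. induction N.
  - rewrite !sum_n_O_C. rewrite H0. simpl. ring.
  - rewrite !sum_n_S_C. rewrite HS. rewrite RtoC_plus.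
    set (X := sum_n (fun j => RtoC (B j) * w ^ j)%C N).
    set (Y := sum_n (fun j => RtoC (beta j) * w ^ j)%C N).
    fold X in IHN. fold Y in IHN.
    replace Y with ((1 - w) * X + RtoC (B N) * w ^ S N)%C by (rewrite IHN; ring).
    change (w ^ S (S N))%C with (w * w ^ S N)%C. ring.
Qed.

Lemma Clim_geo_aux (S s t : nat -> C) (w L : C) :
  w <> 1%C -> (forall N, (1 - w) * S N = s N - t N)%C -> Clim s L -> Clim t 0 ->
  Clim S (/ (1 - w) * L)%C.
Proof.
  intros Hw Hid Hs Ht.
  assert (Hw' : (1 - w)%C <> 0%C).
  { intro H. apply Hw. replace w with (1 - (1 - w))%C by ring. rewrite H. ring. }
  apply (Clim_ext (fun N => / (1 - w) * (s N - t N))%C).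
  { exists O. intros n _. rewrite <- Hid. field. auto. }
  replace (/ (1 - w) * L)%C with (/ (1 - w) * (L - 0))%C by ring.
  apply Clim_scal. apply Clim_minus; auto.
Qed.

Fixpoint bcoef (p j : nat) : R :=
  match p with O => 1 | S p' => sum_f_R0 (bcoef p') j end.

Lemma bcoef_ge1 p j : 1 <= bcoef p j.
Proof.
  revert j; induction p; intros j; simpl. lra.
  induction j; simpl. apply IHp. pose proof (IHp (S j)). lra.
Qed.

Lemma pow_le1 (x : R) n : 0 <= x <= 1 -> x ^ n <= 1.
Proof. intros H. induction n; simpl. lra. pose proof (pow_le x n). nra. Qed.

Lemma pow_sqrt_bound (s : R) (j N : nat) : 0 <= s <= 1 -> (j <= N)%nat ->
  s ^ N <= sqrt s ^ j * sqrt s ^ N.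
Proof.
  intros Hs HjN.
  assert (Hq : 0 <= sqrt s <= 1).
  { split. apply sqrt_pos. rewrite <- sqrt_1. apply sqrt_le_1_alt. lra. }
  replace (s ^ N) with (sqrt s ^ (j + N) * sqrt s ^ (N - j)).
  - rewrite pow_add. assert (0 <= sqrt s ^ j * sqrt s ^ N) by (apply Rmult_le_pos; apply pow_le; lra).
    assert (0 <= sqrt s ^ (N - j) <= 1) by (split; [apply pow_le; lra| apply pow_le1; lra]).
    nra.
  - rewrite <- pow_add. replace (j + N + (N - j))%nat with (N * 2)%nat by lia.
    rewrite Nat.mul_comm, pow_mult. rewrite pow2_sqrt by lra. reflexivity.
Qed.

Lemma fst_sum_n (a : nat -> C) N : fst (sum_n a N) = sum_f_R0 (fun j => fst (a j)) N.
Proof. induction N. rewrite sum_n_O_C. reflexivity. rewrite sum_n_S_C. simpl. rewrite <- IHN. reflexivity. Qed.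

Lemma snd_sum_n (a : nat -> C) N : snd (sum_n a N) = sum_f_R0 (fun j => snd (a j)) N.
Proof. induction N. rewrite sum_n_O_C. reflexivity. rewrite sum_n_S_C. simpl. rewrite <- IHN. reflexivity. Qed.

Lemma Un_cv_ext (u v : nat -> R) l : (forall n, u n = v n) -> Un_cv u l -> Un_cv v l.
Proof. intros H Hu eps Heps. destruct (Hu eps Heps) as [N HN]. exists N. intros. rewrite <- H. auto. Qed.

Lemma real_bound_of_Clim (a : nat -> R) (L : C) :
  (forall j, 0 <= a j) -> Clim (sum_n (fun j => RtoC (a j))) L -> forall N, sum_f_R0 a N <= fst L.
Proof.
  intros Ha HL. apply Clim_fst in HL.
  apply growing_ineq.
  - intros n. simpl. pose proof (Ha (S n)). lra.
  - refine (Un_cv_ext _ _ _ _ HL). intros n. rewrite fst_sum_n. reflexivity.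
Qed.

Lemma sum_n_delta (w : C) N :
  @eq C (sum_n (fun j => RtoC (match j with O => 1 | S _ => 0 end) * w ^ j)%C N) (RtoC 1).
Proof. induction N. rewrite sum_n_O_C. simpl. ring. rewrite sum_n_S_C, IHN. ring. Qed.

Lemma Clim_pow0 (w : C) (K : R) : Cmod w < 1 -> Clim (fun N => RtoC K * w ^ N)%C 0.
Proof.
  intros Hw. apply Clim_to0. intros eps Heps.
  destruct (pow_lt_1_zero (Cmod w)) with (y := eps / (Rabs K + 1)) as [N HN].
  { rewrite Rabs_pos_eq; auto. apply Cmod_ge_0. }
  { apply Rdiv_lt_0_compat; auto. pose proof (Rabs_pos K). lra. }
  exists N. intros n Hn. specialize (HN n Hn).
  rewrite Cmod_mult, Cmod_R, Cmod_pow. rewrite Rabs_pos_eq in HN by (apply pow_le, Cmod_ge_0).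
  pose proof (Rabs_pos K). pose proof (pow_le (Cmod w) n (Cmod_ge_0 _)).
  apply Rmult_lt_compat_l with (r := Rabs K + 1) in HN; [|lra].
  replace ((Rabs K + 1) * (eps / (Rabs K + 1))) with eps in HN by (field; lra). nra.
Qed.

Lemma Cmod_lt1_neq1 (w : C) : Cmod w < 1 -> w <> 1%C.
Proof. intros H E. rewrite E, Cmod_1 in H. lra. Qed.

Lemma bser p : forall w : C, Cmod w < 1 ->
  Clim (sum_n (fun j => RtoC (bcoef p j) * w ^ j)%C) (/ (1 - w) ^ (S p))%C.
Proof.
  induction p; intros w Hw.
  - pose proof (ident_geo (fun j => match j with O => 1 | S _ => 0 end) (bcoef 0) w eq_refl
      (fun j => ltac:(simpl; ring))) as Hid.
    replace (/ (1 - w) ^ 1)%C with (/ (1 - w) * 1)%C.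
    2:{ simpl. rewrite Cmult_1_r, Cmult_1_r. reflexivity. }
    eapply Clim_geo_aux. apply Cmod_lt1_neq1; auto. exact Hid.
    + eapply Clim_ext; [|apply (Clim_const 1%C)]. exists O. intros. rewrite sum_n_delta. reflexivity.
    + simpl bcoef. apply (Clim_ext (fun N => RtoC 1 * w * w ^ N)%C).
      { exists O. intros. simpl. ring. }
      replace (RtoC 0) with (RtoC 1 * w * 0)%C by ring.
      apply (Clim_ext (fun N => (RtoC 1 * w) * (RtoC 1 * w ^ N))%C). { exists O; intros; ring. }
      apply Clim_scal. apply Clim_pow0; auto.
  - pose proof (ident_geo (bcoef p) (bcoef (S p)) w eq_refl (fun j => eq_refl)) as Hid.
    assert (Hw1 : (1 - w)%C <> 0%C).
    { intro H. apply (Cmod_lt1_neq1 w Hw). replace w with (1 - (1 - w))%C by ring. rewrite H. ring. }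
    replace (/ (1 - w) ^ S (S p))%C with (/ (1 - w) * / (1 - w) ^ S p)%C.
    2:{ change ((1 - w) ^ S (S p))%C with ((1 - w) * (1 - w) ^ S p)%C.
        assert ((1 - w) ^ S p <> 0)%C.
        { apply Cmod_gt_0. rewrite Cmod_pow. apply pow_lt. apply Cmod_gt_0; auto. }
        field. auto. }
    eapply Clim_geo_aux. apply Cmod_lt1_neq1; auto. exact Hid. apply IHp; auto.
    set (s := Cmod w). set (q := sqrt s).
    assert (Hs : 0 <= s < 1) by (split; [apply Cmod_ge_0 | auto]).
    assert (Hq : 0 <= q < 1).
    { split. apply sqrt_pos. unfold q. rewrite <- sqrt_1. apply sqrt_lt_1_alt. lra. }
    assert (HK : forall N, sum_f_R0 (fun j => bcoef p j * q ^ j) N <= fst (/ (1 - RtoC q) ^ S p)%C).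
    { apply real_bound_of_Clim.
      - intros j. pose proof (bcoef_ge1 p j). pose proof (pow_le q j (proj1 Hq)). nra.
      - eapply Clim_ext; [| apply IHp].
        + exists O. intros n _. apply sum_n_ext. intros j. rewrite RtoC_mult, RtoC_pow. reflexivity.
        + rewrite Cmod_RtoC_pos; lra. }
    set (K := fst (/ (1 - RtoC q) ^ S p)%C) in HK.
    apply Clim_to0. intros eps Heps.
    destruct (pow_lt_1_zero q) with (y := eps / (Rabs K + 1)) as [N HN].
    { rewrite Rabs_pos_eq; lra. }
    { apply Rdiv_lt_0_compat; auto. pose proof (Rabs_pos K). lra. }
    exists N. intros n Hn. specialize (HN n Hn).
    rewrite Rabs_pos_eq in HN by (apply pow_le; lra).
    rewrite Cmod_mult, Cmod_pow. fold s.
    pose proof (bcoef_ge1 (S p) n) as HB.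
    rewrite Cmod_RtoC_pos by lra.
    assert (H1 : bcoef (S p) n * s ^ S n <= bcoef (S p) n * s ^ n).
    { simpl pow. pose proof (pow_le s n (proj1 Hs)). assert (0 <= bcoef (S p) n * s ^ n) by (apply Rmult_le_pos; lra). replace (bcoef (S p) n * (s * s ^ n)) with (s * (bcoef (S p) n * s ^ n)) by ring. nra. }
    assert (H2 : bcoef (S p) n * s ^ n <= q ^ n * sum_f_R0 (fun j => bcoef p j * q ^ j) n).
    { change (bcoef (S p) n) with (sum_f_R0 (bcoef p) n).
      rewrite Rmult_comm, scal_sum, scal_sum.
      apply sum_Rle. intros j Hj.
      pose proof (pow_sqrt_bound s j n ltac:(lra) Hj). fold q in H.
      pose proof (bcoef_ge1 p j). nra. }
    specialize (HK n).
    pose proof (Rabs_pos K). pose proof (pow_le q n (proj1 Hq)).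
    assert (H3 : q ^ n * sum_f_R0 (fun j => bcoef p j * q ^ j) n <= q ^ n * (Rabs K)).
    { apply Rmult_le_compat_l; auto. pose proof (Rle_abs K). lra. }
    apply Rmult_lt_compat_l with (r := Rabs K + 1) in HN; [|lra].
    replace ((Rabs K + 1) * (eps / (Rabs K + 1))) with eps in HN by (field; lra).
    nra.
Qed.

Definition shiftC (n : nat) (h : nat -> C) (m : nat) : C :=
  if (m <? n)%nat then RtoC 0 else h (m - n)%nat.

Definition shiftR (n : nat) (g : nat -> R) (m : nat) : R :=
  if (m <? n)%nat then 0 else g (m - n)%nat.

Lemma sum_shiftC_zero n h (z : C) M : (M < n)%nat ->
  @eq C (sum_n (fun m => shiftC n h m * z ^ m)%C M) (RtoC 0).
Proof.
  induction M; intros HM.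
  - rewrite sum_n_O_C. unfold shiftC. destruct (Nat.ltb_spec 0 n); [|lia]. ring.
  - rewrite sum_n_S_C, IHM by lia. unfold shiftC. destruct (Nat.ltb_spec (S M) n); [|lia]. ring.
Qed.

Lemma sum_shiftC n h (z : C) N :
  @eq C (sum_n (fun m => shiftC n h m * z ^ m)%C (n + N)) (z ^ n * sum_n (fun j => h j * z ^ j) N)%C.
Proof.
  induction N.
  - rewrite sum_n_O_C. rewrite Nat.add_0_r. destruct n.
    + rewrite sum_n_O_C. unfold shiftC. simpl. ring.
    + rewrite sum_n_S_C, sum_shiftC_zero by lia. unfold shiftC.
      destruct (Nat.ltb_spec (S n) (S n)); [lia|]. rewrite Nat.sub_diag. simpl. ring.
  - replace (n + S N)%nat with (S (n + N)) by lia.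
    rewrite !sum_n_S_C, IHN. unfold shiftC.
    destruct (Nat.ltb_spec (S (n + N)) n); [lia|].
    replace (S (n + N) - n)%nat with (S N) by lia.
    replace (S (n + N)) with (n + S N)%nat by lia. rewrite Cpow_add_r. ring.
Qed.

Lemma sum_shiftR n g M :
  sum_f_R0 (shiftR n g) M = if (M <? n)%nat then 0 else sum_f_R0 g (M - n).
Proof.
  induction M.
  - simpl. unfold shiftR. destruct (Nat.ltb_spec 0 n). reflexivity.
    replace n with O by lia. reflexivity.
  - change (sum_f_R0 (shiftR n g) (S M)) with (sum_f_R0 (shiftR n g) M + shiftR n g (S M)).
    rewrite IHM. unfold shiftR.
    destruct (Nat.ltb_spec M n); destruct (Nat.ltb_spec (S M) n); try lia.
    + ring.
    + replace n with (S M) by lia. rewrite Nat.sub_diag. simpl. ring.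
    + replace (S M - n)%nat with (S (M - n)) by lia. reflexivity.
Qed.

Lemma sum_f_R0_mono (g : nat -> R) M M' : (forall j, 0 <= g j) -> (M <= M')%nat ->
  sum_f_R0 g M <= sum_f_R0 g M'.
Proof.
  intros Hg H. induction H. lra. simpl. pose proof (Hg (S m)). lra.
Qed.

Lemma sum_f_R0_nonneg (g : nat -> R) M : (forall j, 0 <= g j) -> 0 <= sum_f_R0 g M.
Proof. intros Hg. induction M; simpl. apply Hg. pose proof (Hg (S M)). lra. Qed.

Lemma term_le_sum (g : nat -> R) j M : (forall j, 0 <= g j) -> (j <= M)%nat -> g j <= sum_f_R0 g M.
Proof.
  intros Hg H. eapply Rle_trans; [|apply (sum_f_R0_mono g j M Hg H)].
  destruct j; simpl. lra. pose proof (sum_f_R0_nonneg g j Hg). lra.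
Qed.

Lemma sum_shiftR_le n g M : (forall j, 0 <= g j) -> sum_f_R0 (shiftR n g) M <= sum_f_R0 g M.
Proof.
  intros Hg. rewrite sum_shiftR. destruct (Nat.ltb_spec M n).
  apply sum_f_R0_nonneg; auto. apply sum_f_R0_mono; auto. lia.
Qed.

Lemma Clim_shift (u : nat -> C) n l : Clim (fun N => u (n + N)%nat) l -> Clim u l.
Proof.
  intros H eps Heps. destruct (H eps Heps) as [N HN]. exists (n + N)%nat. intros m Hm.
  replace m with (n + (m - n))%nat by lia. apply HN. lia.
Qed.

Lemma sum_n_Cscal (K : C) u N : @eq C (sum_n (fun j => K * u j)%C N) (K * sum_n u N)%C.
Proof. induction N. rewrite !sum_n_O_C. ring. rewrite !sum_n_S_C, IHN. ring. Qed.

Lemma Cpow_mul_l (x y : C) n : ((x * y) ^ n = x ^ n * y ^ n)%C.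
Proof. induction n; simpl. ring. rewrite IHn. ring. Qed.

Definition hcoef (n : nat) (a : C) (j : nat) : C :=
  (RtoC (INR (fact n) * bcoef n j) * Cconj a ^ j)%C.
Definition dcoef (n : nat) (a : C) : nat -> C := shiftC n (hcoef n a).

Lemma Cmod_conj_lt a : Cmod a < 1 -> forall z, Cmod z < 1 -> Cmod (Cconj a * z)%C < 1.
Proof.
  intros Ha z Hz. rewrite Cmod_mult, Cmod_conj.
  pose proof (Cmod_ge_0 a). pose proof (Cmod_ge_0 z). nra.
Qed.

Lemma kser n a : Cmod a < 1 -> forall z, Cmod z < 1 ->
  Clim (sum_n (fun m => dcoef n a m * z ^ m)%C) (k_na n a z).
Proof.
  intros Ha z Hz. apply (Clim_shift _ n).
  pose proof (bser n (Cconj a * z)%C (Cmod_conj_lt a Ha z Hz)) as H.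
  apply (Clim_scal (RtoC (INR (fact n)) * z ^ n)%C) in H.
  eapply Clim_ext; [|exact H].
  - exists O. intros N _. unfold dcoef. rewrite sum_shiftC.
    rewrite (sum_n_ext (fun j => hcoef n a j * z ^ j)%C (fun j => RtoC (INR (fact n)) * (RtoC (bcoef n j) * (Cconj a * z) ^ j))%C).
    2:{ intros j. Ceq. unfold hcoef. rewrite RtoC_mult. rewrite Cpow_mul_l. ring. }
    rewrite sum_n_Cscal. ring.
Qed.

Lemma Cmod_hcoef n a j : Cmod (hcoef n a j) = INR (fact n) * (bcoef n j * Cmod a ^ j).
Proof.
  unfold hcoef. rewrite Cmod_mult, Cmod_pow, Cmod_conj, Cmod_RtoC_pos.
  ring. pose proof (bcoef_ge1 n j). pose proof (pos_INR (fact n)). nra.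
Qed.

Lemma Cmod_dcoef n a m : Cmod (dcoef n a m) = shiftR n (fun j => Cmod (hcoef n a j)) m.
Proof. unfold dcoef, shiftC, shiftR. destruct (m <? n)%nat. apply Cmod_0. reflexivity. Qed.

Lemma bcoef_0 p : bcoef p 0 = 1.
Proof. induction p. reflexivity. simpl. exact IHp. Qed.

Lemma dcoef_n n a : dcoef n a n = RtoC (INR (fact n)).
Proof.
  unfold dcoef, shiftC. destruct (Nat.ltb_spec n n); [lia|]. rewrite Nat.sub_diag.
  unfold hcoef. rewrite bcoef_0, Rmult_1_r. change (Cconj a ^ 0)%C with (RtoC 1). ring.
Qed.

Lemma d_sq_bound n a : Cmod a < 1 -> exists B, forall M,
  sum_f_R0 (fun m => Cmod (dcoef n a m) ^ 2) M <= B.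
Proof.
  intros Ha.
  set (s := Cmod a).
  assert (Hs : 0 <= s < 1) by (split; [apply Cmod_ge_0|auto]).
  set (beta := fun j => bcoef n j * s ^ j).
  assert (Hb0 : forall j, 0 <= beta j).
  { intros j. unfold beta. pose proof (bcoef_ge1 n j). pose proof (pow_le s j (proj1 Hs)). nra. }
  assert (HK : forall N, sum_f_R0 beta N <= fst (/ (1 - RtoC s) ^ S n)%C).
  { apply real_bound_of_Clim. auto.
    eapply Clim_ext; [| apply bser].
    + exists O. intros N _. apply sum_n_ext. intros j. unfold beta. rewrite RtoC_mult, RtoC_pow. reflexivity.
    + rewrite Cmod_RtoC_pos; lra. }
  set (K := fst (/ (1 - RtoC s) ^ S n)%C) in HK.
  set (f := INR (fact n)).
  assert (Hf : 0 <= f) by apply pos_INR.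
  exists (f ^ 2 * K * K). intros M.
  apply Rle_trans with (sum_f_R0 (shiftR n (fun j => (f * beta j) ^ 2)) M).
  { apply sum_Rle. intros m _. rewrite Cmod_dcoef. unfold shiftR. destruct (m <? n)%nat.
    simpl; lra. rewrite Cmod_hcoef. right. reflexivity. }
  eapply Rle_trans. apply sum_shiftR_le. intros j. apply pow2_ge_0.
  apply Rle_trans with (sum_f_R0 (fun j => f ^ 2 * K * beta j) M).
  { apply sum_Rle. intros j _. pose proof (term_le_sum beta j j Hb0 (le_n j)).
    pose proof (HK j). pose proof (Hb0 j).
    assert (beta j <= K) by lra.
    replace ((f * beta j) ^ 2) with (f ^ 2 * (beta j * beta j)) by ring.
    rewrite Rmult_assoc. apply Rmult_le_compat_l. apply pow2_ge_0. nra. }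
  replace (sum_f_R0 (fun j => f ^ 2 * K * beta j) M) with (f ^ 2 * K * sum_f_R0 beta M) by (rewrite scal_sum; apply sum_eq; intros; ring).
  assert (0 <= K). { pose proof (HK O). pose proof (Hb0 O). simpl in *. lra. }
  apply Rmult_le_compat_l. apply Rmult_le_pos; auto. apply pow2_ge_0. apply HK.
Qed.

Lemma cis_mult a b : (cis a * cis b)%C = cis (a + b).
Proof. unfold cis. rewrite cos_plus, sin_plus. apply injective_projections; simpl; ring. Qed.

Lemma cis_conj a : Cconj (cis a) = cis (- a).
Proof. unfold cis, Cconj. rewrite cos_neg, sin_neg. reflexivity. Qed.

Lemma Cmod_cis t : Cmod (cis t) = 1.
Proof. unfold Cmod, cis. simpl. replace (cos t * (cos t * 1) + sin t * (sin t * 1)) with ((sin t)² + (cos t)²) by (unfold Rsqr; ring). rewrite sin2_cos2. apply sqrt_1. Qed.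

Lemma Cmod_rcis r t : 0 <= r -> Cmod (RtoC r * cis t)%C = r.
Proof. intros. rewrite Cmod_mult, Cmod_cis, Cmod_RtoC_pos; auto; ring. Qed.

Lemma rcis_pow r t m : ((RtoC r * cis t) ^ m)%C = (RtoC (r ^ m) * cis (INR m * t))%C.
Proof.
  induction m.
  - simpl. unfold cis. rewrite Rmult_0_l, cos_0, sin_0. apply injective_projections; simpl; ring.
  - change ((RtoC r * cis t) ^ S m)%C with ((RtoC r * cis t) * (RtoC r * cis t) ^ m)%C.
    rewrite IHm. rewrite S_INR.
    replace ((INR m + 1) * t) with (t + INR m * t) by ring. rewrite <- cis_mult.
    simpl pow. rewrite RtoC_mult. ring.
Qed.

Definition CV := C_R_CompleteNormedModule.

Lemma is_RInt_C_split (g : R -> C) a b (l : C) :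
  is_RInt (fun t => fst (g t)) a b (fst l) -> is_RInt (fun t => snd (g t)) a b (snd l) ->
  is_RInt (V := CV) g a b l.
Proof.
  intros H1 H2. destruct l as [x y].
  apply (is_RInt_fct_extend_pair (U := R_NormedModule) (V := R_NormedModule) g a b x y H1 H2).
Qed.

Lemma is_RInt_C_fst (g : R -> C) a b (l : C) :
  is_RInt (V := CV) g a b l -> is_RInt (fun t => fst (g t)) a b (fst l).
Proof. intros H. apply (is_RInt_fct_extend_fst (U := R_NormedModule) (V := R_NormedModule) g a b l H). Qed.

Lemma is_RInt_C_snd (g : R -> C) a b (l : C) :
  is_RInt (V := CV) g a b l -> is_RInt (fun t => snd (g t)) a b (snd l).
Proof. intros H. apply (is_RInt_fct_extend_snd (U := R_NormedModule) (V := R_NormedModule) g a b l H). Qed.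

Lemma is_RInt_Cscal (g : R -> C) a b (l K : C) :
  is_RInt (V := CV) g a b l -> is_RInt (V := CV) (fun t => K * g t)%C a b (K * l)%C.
Proof.
  intros H. pose proof (is_RInt_C_fst g a b l H) as H1. pose proof (is_RInt_C_snd g a b l H) as H2.
  destruct K as [p q].
  apply is_RInt_C_split.
  - simpl. apply (is_RInt_ext (fun t => minus (scal p (fst (g t))) (scal q (snd (g t))))).
    { intros; reflexivity. }
    replace (p * fst l - q * snd l) with (minus (scal p (fst l)) (scal q (snd l))) by reflexivity.
    apply (is_RInt_minus (V := R_NormedModule)); apply (is_RInt_scal (V := R_NormedModule)); auto.
  - simpl. apply (is_RInt_ext (fun t => plus (scal p (snd (g t))) (scal q (fst (g t))))).
    { intros; reflexivity. }
    replace (p * snd l + q * fst l) with (plus (scal p (snd l)) (scal q (fst l))) by reflexivity.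
    apply (is_RInt_plus (V := R_NormedModule)); apply (is_RInt_scal (V := R_NormedModule)); auto.
Qed.

Lemma is_RInt_Cplus (f g : R -> C) a b (l k : C) :
  is_RInt (V := CV) f a b l -> is_RInt (V := CV) g a b k ->
  is_RInt (V := CV) (fun t => f t + g t)%C a b (l + k)%C.
Proof.
  intros Hf Hg. apply is_RInt_C_split.
  - simpl. replace (fst l + fst k) with (plus (fst l) (fst k)) by reflexivity.
    apply (is_RInt_plus (V := R_NormedModule) (fun t => fst (f t)) (fun t => fst (g t))); apply is_RInt_C_fst; auto.
  - simpl. replace (snd l + snd k) with (plus (snd l) (snd k)) by reflexivity.
    apply (is_RInt_plus (V := R_NormedModule) (fun t => snd (f t)) (fun t => snd (g t))); apply is_RInt_C_snd; auto.
Qed.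

Lemma is_RInt_val {V : NormedModule R_AbsRing} (f : R -> V) a b l l' :
  is_RInt f a b l -> l = l' -> is_RInt f a b l'.
Proof. intros H E; subst; auto. Qed.

Lemma is_RInt_cis_nz (w : R) : w <> 0 -> sin (w * (2 * PI)) = 0 -> cos (w * (2 * PI)) = 1 ->
  is_RInt (V := CV) (fun t => cis (w * t)) 0 (2 * PI) (RtoC 0).
Proof.
  intros Hw Hs Hc. apply is_RInt_C_split; simpl.
  - apply (is_RInt_val (V := R_NormedModule) _ _ _ (minus ((fun t => sin (w * t) / w) (2 * PI)) ((fun t => sin (w * t) / w) 0))).
    2:{ simpl. rewrite Hs, Rmult_0_r, sin_0. unfold minus, plus, opp; simpl. field. auto. }
    apply (is_RInt_derive (V := R_CompleteNormedModule) (fun t => sin (w * t) / w)).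
    + intros x _. auto_derive. auto. field. auto.
    + intros x _. apply (ex_derive_continuous (fun t => cos (w * t))). auto_derive. auto.
  - apply (is_RInt_val (V := R_NormedModule) _ _ _ (minus ((fun t => - cos (w * t) / w) (2 * PI)) ((fun t => - cos (w * t) / w) 0))).
    2:{ simpl. rewrite Hc, Rmult_0_r, cos_0. unfold minus, plus, opp; simpl. field. auto. }
    apply (is_RInt_derive (V := R_CompleteNormedModule) (fun t => - cos (w * t) / w)).
    + intros x _. auto_derive. auto. field. auto.
    + intros x _. apply (ex_derive_continuous (fun t => sin (w * t))). auto_derive. auto.
Qed.

Lemma is_RInt_cis_0 :
  is_RInt (V := CV) (fun t => cis (0 * t)) 0 (2 * PI) (RtoC (2 * PI)).
Proof.
  apply is_RInt_C_split; simpl.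
  - apply (is_RInt_ext (fun _ => 1)). { intros. rewrite Rmult_0_l, cos_0. reflexivity. }
    replace (2 * PI) with (scal (2 * PI - 0) 1) at 2.
    apply (is_RInt_const (V := R_NormedModule)). unfold scal; simpl. unfold mult; simpl. ring.
  - apply (is_RInt_ext (fun _ => 0)). { intros. rewrite Rmult_0_l, sin_0. reflexivity. }
    replace 0 with (scal (2 * PI - 0) 0) at 2.
    apply (is_RInt_const (V := R_NormedModule)). unfold scal; simpl. unfold mult; simpl. ring.
Qed.

Lemma sin_cos_nat k : sin (INR k * (2 * PI)) = 0 /\ cos (INR k * (2 * PI)) = 1.
Proof.
  pose proof (sin_period 0 k). pose proof (cos_period 0 k).
  rewrite Rplus_0_l, sin_0 in H. rewrite Rplus_0_l, cos_0 in H0.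
  replace (INR k * (2 * PI)) with (2 * INR k * PI) by ring. auto.
Qed.

Lemma sin_cos_int m j : sin ((INR m - INR j) * (2 * PI)) = 0 /\ cos ((INR m - INR j) * (2 * PI)) = 1.
Proof.
  destruct (sin_cos_nat m) as [H1 H2]. destruct (sin_cos_nat j) as [H3 H4].
  replace ((INR m - INR j) * (2 * PI)) with (INR m * (2 * PI) - INR j * (2 * PI)) by ring.
  rewrite sin_minus, cos_minus, H1, H2, H3, H4. split; ring.
Qed.

Lemma Cconj_RtoC x : Cconj (RtoC x) = RtoC x.
Proof. unfold Cconj. simpl. apply injective_projections; simpl; ring. Qed.

Lemma is_RInt_mono (cm dj : C) r m j :
  is_RInt (V := CV) (fun t => (cm * (RtoC r * cis t) ^ m) * Cconj (dj * (RtoC r * cis t) ^ j))%C 0 (2 * PI)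
    (if Nat.eqb m j then RtoC (2 * PI) * (cm * Cconj dj * RtoC (r ^ (2 * m))) else RtoC 0)%C.
Proof.
  apply (is_RInt_ext (fun t => (cm * Cconj dj * RtoC (r ^ m * r ^ j)) * cis ((INR m - INR j) * t))%C).
  { intros t _. rewrite !rcis_pow, Cmult_conj, Cmult_conj, Cconj_RtoC, cis_conj.
    replace ((INR m - INR j) * t) with (INR m * t + - (INR j * t)) by ring.
    rewrite <- cis_mult. rewrite RtoC_mult. Ceq. ring. }
  destruct (Nat.eqb_spec m j).
  - subst j. replace (RtoC (2 * PI) * (cm * Cconj dj * RtoC (r ^ (2 * m))))%C
      with ((cm * Cconj dj * RtoC (r ^ m * r ^ m)) * RtoC (2 * PI))%C.
    2:{ rewrite <- pow_add. replace (m + m)%nat with (2 * m)%nat by lia. ring. }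
    apply is_RInt_Cscal. replace (INR m - INR m) with 0 by ring. apply is_RInt_cis_0.
  - replace (RtoC 0) with ((cm * Cconj dj * RtoC (r ^ m * r ^ j)) * RtoC 0)%C by ring.
    apply is_RInt_Cscal. destruct (sin_cos_int m j).
    apply is_RInt_cis_nz; auto.
    intro E. apply n. apply INR_eq. lra.
Qed.

Definition zc (r t : R) : C := (RtoC r * cis t)%C.
Definition psum (c : nat -> C) (r : R) (N : nat) (t : R) : C := sum_n (fun m => c m * zc r t ^ m)%C N.

Lemma psum_S c r N t : psum c r (S N) t = (psum c r N t + c (S N) * zc r t ^ (S N))%C.
Proof. unfold psum. rewrite sum_n_S_C. reflexivity. Qed.
Lemma psum_O c r t : psum c r O t = (c O * zc r t ^ O)%C.
Proof. unfold psum. rewrite sum_n_O_C. reflexivity. Qed.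

Lemma row (cm : C) m (d : nat -> C) r M :
  is_RInt (V := CV) (fun t => (cm * zc r t ^ m) * Cconj (psum d r M t))%C 0 (2 * PI)
    (if Nat.leb m M then RtoC (2 * PI) * (cm * Cconj (d m) * RtoC (r ^ (2 * m))) else RtoC 0)%C.
Proof.
  induction M.
  - apply (is_RInt_ext (fun t => (cm * zc r t ^ m) * Cconj (d O * zc r t ^ O))%C).
    { intros. rewrite psum_O. reflexivity. }
    eapply is_RInt_val. apply (is_RInt_mono cm (d O) r m O).
    destruct m; reflexivity.
  - apply (is_RInt_ext (fun t => (cm * zc r t ^ m) * Cconj (psum d r M t) + (cm * zc r t ^ m) * Cconj (d (S M) * zc r t ^ (S M)))%C).
    { intros. rewrite psum_S, Cplus_conj. Ceq. ring. }
    eapply is_RInt_val. apply is_RInt_Cplus. apply IHM. apply (is_RInt_mono cm (d (S M)) r m (S M)).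
    destruct (Nat.leb_spec m M); destruct (Nat.eqb_spec m (S M)); destruct (Nat.leb_spec m (S M)); try lia;
      try (subst; Ceq; ring).
Qed.

Lemma full (c d : nat -> C) r M N :
  is_RInt (V := CV) (fun t => psum c r N t * Cconj (psum d r M t))%C 0 (2 * PI)
    (RtoC (2 * PI) * sum_n (fun m => if Nat.leb m M then c m * Cconj (d m) * RtoC (r ^ (2 * m)) else RtoC 0) N)%C.
Proof.
  induction N.
  - apply (is_RInt_ext (fun t => (c O * zc r t ^ O) * Cconj (psum d r M t))%C).
    { intros. rewrite psum_O. reflexivity. }
    eapply is_RInt_val. apply row. rewrite sum_n_O_C. destruct (Nat.leb 0 M); Ceq; ring.
  - apply (is_RInt_ext (fun t => psum c r N t * Cconj (psum d r M t) + (c (S N) * zc r t ^ (S N)) * Cconj (psum d r M t))%C).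
    { intros. rewrite psum_S. Ceq. ring. }
    eapply is_RInt_val. apply is_RInt_Cplus. apply IHN. apply row.
    rewrite sum_n_S_C. destruct (Nat.leb (S N) M); Ceq; ring.
Qed.

Lemma full_diag (c d : nat -> C) r N :
  is_RInt (V := CV) (fun t => psum c r N t * Cconj (psum d r N t))%C 0 (2 * PI)
    (RtoC (2 * PI) * sum_n (fun m => c m * Cconj (d m) * RtoC (r ^ (2 * m))) N)%C.
Proof.
  eapply is_RInt_val. apply full. f_equal. apply sum_n_ext_loc. intros m Hm.
  destruct (Nat.leb_spec m N); [reflexivity|lia].
Qed.

Lemma real_series_lim (a : nat -> R) B : (forall j, 0 <= a j) -> (forall N, sum_f_R0 a N <= B) ->
  exists L, Un_cv (sum_f_R0 a) L /\ (forall N, sum_f_R0 a N <= L).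
Proof.
  intros Ha HB.
  assert (Hg : Un_growing (sum_f_R0 a)). { intros n. simpl. pose proof (Ha (S n)). lra. }
  destruct (growing_cv (sum_f_R0 a) Hg) as [L HL].
  { exists B. intros x [i ->]. apply HB. }
  exists L. split; auto. apply growing_ineq; auto.
Qed.

Lemma Cmod_zc r t : 0 <= r -> Cmod (zc r t) = r.
Proof. intros. unfold zc. apply Cmod_rcis; auto. Qed.

Lemma Cmod_term (c : nat -> C) r t m : 0 <= r -> Cmod (c m * zc r t ^ m)%C = Cmod (c m) * r ^ m.
Proof. intros. rewrite Cmod_mult, Cmod_pow, Cmod_zc; auto. Qed.

Lemma psum_diff (c : nat -> C) (r t : R) (N M : nat) : 0 <= r -> (N <= M)%nat ->
  Cmod (psum c r M t - psum c r N t) <= sum_f_R0 (fun m => Cmod (c m) * r ^ m) M - sum_f_R0 (fun m => Cmod (c m) * r ^ m) N.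
Proof.
  intros Hr H. induction H.
  - replace (psum c r N t - psum c r N t)%C with (RtoC 0) by ring. rewrite Cmod_0. lra.
  - rewrite psum_S. rewrite tech5.
    replace (psum c r m t + c (S m) * zc r t ^ S m - psum c r N t)%C
      with ((psum c r m t - psum c r N t) + c (S m) * zc r t ^ S m)%C by ring.
    eapply Rle_trans. apply Cmod_triangle. rewrite Cmod_term; auto. lra.
Qed.

Lemma psum_bound (c : nat -> C) (r t : R) (N : nat) : 0 <= r -> Cmod (psum c r N t) <= sum_f_R0 (fun m => Cmod (c m) * r ^ m) N.
Proof.
  intros Hr. induction N.
  - rewrite psum_O, Cmod_term; auto. simpl. lra.
  - rewrite psum_S. rewrite tech5. eapply Rle_trans. apply Cmod_triangle. rewrite Cmod_term; auto. lra.
Qed.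

Lemma lim_bounds (F : C -> C) (c : nat -> C) (r L : R) :
  0 <= r -> (forall j, 0 <= Cmod (c j) * r ^ j) ->
  Un_cv (sum_f_R0 (fun m => Cmod (c m) * r ^ m)) L ->
  (forall N, sum_f_R0 (fun m => Cmod (c m) * r ^ m) N <= L) ->
  forall t, Clim (fun N => psum c r N t) (F (zc r t)) ->
  Cmod (F (zc r t)) <= L /\
  forall N, Cmod (F (zc r t) - psum c r N t) <= L - sum_f_R0 (fun m => Cmod (c m) * r ^ m) N.
Proof.
  intros Hr Hnn Hcv Hle t Hlim. split.
  - replace (F (zc r t)) with (F (zc r t) - 0)%C by ring. apply (Clim_le _ _ _ _ Hlim).
    exists O. intros n _. replace (psum c r n t - 0)%C with (psum c r n t) by ring.
    eapply Rle_trans. apply psum_bound; auto. apply Hle.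
  - intros N. apply (Clim_le _ _ _ _ Hlim). exists N. intros n Hn.
    eapply Rle_trans. apply psum_diff; auto. pose proof (Hle n). lra.
Qed.

Lemma unif_prod (F G : C -> C) (c d : nat -> C) r Lc Ld :
  0 <= r ->
  (forall t, Cmod (F (zc r t)) <= Lc /\ forall N, Cmod (F (zc r t) - psum c r N t) <= Lc - sum_f_R0 (fun m => Cmod (c m) * r ^ m) N) ->
  (forall t, Cmod (G (zc r t)) <= Ld /\ forall N, Cmod (G (zc r t) - psum d r N t) <= Ld - sum_f_R0 (fun m => Cmod (d m) * r ^ m) N) ->
  (forall N, sum_f_R0 (fun m => Cmod (c m) * r ^ m) N <= Lc) ->
  forall t N, Cmod (psum c r N t * Cconj (psum d r N t) - F (zc r t) * Cconj (G (zc r t))) <=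
    (Lc - sum_f_R0 (fun m => Cmod (c m) * r ^ m) N) * Ld + Lc * (Ld - sum_f_R0 (fun m => Cmod (d m) * r ^ m) N).
Proof.
  intros Hr HF HG Hc t N.
  destruct (HF t) as [HF1 HF2]. destruct (HG t) as [HG1 HG2].
  replace (psum c r N t * Cconj (psum d r N t) - F (zc r t) * Cconj (G (zc r t)))%C
    with (- ((F (zc r t) - psum c r N t) * Cconj (G (zc r t)) + psum c r N t * Cconj (G (zc r t) - psum d r N t)))%C.
  2:{ rewrite Cminus_conj. ring. }
  rewrite Cmod_opp. eapply Rle_trans. apply Cmod_triangle.
  rewrite !Cmod_mult, !Cmod_conj.
  pose proof (psum_bound c r t N Hr). pose proof (Hc N).
  specialize (HF2 N). specialize (HG2 N).
  pose proof (Cmod_ge_0 (F (zc r t) - psum c r N t)).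
  pose proof (Cmod_ge_0 (G (zc r t))).
  pose proof (Cmod_ge_0 (psum c r N t)).
  pose proof (Cmod_ge_0 (G (zc r t) - psum d r N t)).
  apply Rplus_le_compat.
  - apply Rmult_le_compat; auto.
  - apply Rmult_le_compat; auto. lra.
Qed.

Lemma parseval (F G : C -> C) (c d : nat -> C) (r Bc Bd : R) :
  0 <= r ->
  (forall t, Clim (fun N => psum c r N t) (F (zc r t))) ->
  (forall t, Clim (fun N => psum d r N t) (G (zc r t))) ->
  (forall N, sum_f_R0 (fun m => Cmod (c m) * r ^ m) N <= Bc) ->
  (forall N, sum_f_R0 (fun m => Cmod (d m) * r ^ m) N <= Bd) ->
  Clim (sum_n (fun m => c m * Cconj (d m) * RtoC (r ^ (2 * m))))%C (inner_r F G r).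
Proof.
  intros Hr HF HG HBc HBd.
  assert (Hnc : forall j, 0 <= Cmod (c j) * r ^ j).
  { intros. apply Rmult_le_pos. apply Cmod_ge_0. apply pow_le; auto. }
  assert (Hnd : forall j, 0 <= Cmod (d j) * r ^ j).
  { intros. apply Rmult_le_pos. apply Cmod_ge_0. apply pow_le; auto. }
  destruct (real_series_lim _ _ Hnc HBc) as [Lc [HLc1 HLc2]].
  destruct (real_series_lim _ _ Hnd HBd) as [Ld [HLd1 HLd2]].
  pose proof (fun t => lim_bounds F c r Lc Hr Hnc HLc1 HLc2 t (HF t)) as BF.
  pose proof (fun t => lim_bounds G d r Ld Hr Hnd HLd1 HLd2 t (HG t)) as BG.
  pose proof (unif_prod F G c d r Lc Ld Hr BF BG HLc2) as U.
  set (g := fun t => (F (zc r t) * Cconj (G (zc r t)))%C).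
  set (fN := fun N t => (psum c r N t * Cconj (psum d r N t))%C).
  assert (Hlim : filterlim fN eventually (locally (T := fct_UniformSpace R CV) g)).
  { apply filterlim_locally. intros eps.
    assert (H0 : 0 <= Lc).
    { pose proof (HLc2 O). pose proof (Hnc O). simpl in *. lra. }
    destruct (HLc1 (eps / (2 * (Ld + 1)))) as [N1 HN1].
    { apply Rdiv_lt_0_compat. apply cond_pos. pose proof (HLd2 O). pose proof (Hnd O). simpl in *. lra. }
    destruct (HLd1 (eps / (2 * (Lc + 1)))) as [N2 HN2].
    { apply Rdiv_lt_0_compat. apply cond_pos. lra. }
    exists (max N1 N2). intros N HN t.
    apply (norm_compat1 (V := C_NormedModule)).
    change (Cmod (fN N t - g t) < eps).
    eapply Rle_lt_trans. apply U.
    specialize (HN1 N ltac:(lia)). specialize (HN2 N ltac:(lia)).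
    unfold R_dist in HN1, HN2.
    rewrite Rabs_minus_sym, Rabs_pos_eq in HN1 by (pose proof (HLc2 N); lra).
    rewrite Rabs_minus_sym, Rabs_pos_eq in HN2 by (pose proof (HLd2 N); lra).
    assert (HLd : 0 <= Ld). { pose proof (HLd2 O). pose proof (Hnd O). simpl in *. lra. }
    set (A := Lc - sum_f_R0 (fun m : nat => Cmod (c m) * r ^ m) N) in *.
    set (B := Ld - sum_f_R0 (fun m : nat => Cmod (d m) * r ^ m) N) in *.
    assert (A * (Ld + 1) < eps / 2).
    { apply Rmult_lt_compat_r with (r := Ld + 1) in HN1; [|lra].
      replace (eps / (2 * (Ld + 1)) * (Ld + 1)) with (eps / 2) in HN1 by (field; lra). lra. }
    assert (B * (Lc + 1) < eps / 2).
    { apply Rmult_lt_compat_r with (r := Lc + 1) in HN2; [|lra].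
      replace (eps / (2 * (Lc + 1)) * (Lc + 1)) with (eps / 2) in HN2 by (field; lra). lra. }
    assert (0 <= A) by (pose proof (HLc2 N); unfold A; lra).
    assert (0 <= B) by (pose proof (HLd2 N); unfold B; lra).
    nra. }
  destruct (filterlim_RInt (U := nat) (V := CV) fN 0 (2 * PI) eventually eventually_filter g
     (fun N => RtoC (2 * PI) * sum_n (fun m => c m * Cconj (d m) * RtoC (r ^ (2 * m))) N)%C
     (fun N => full_diag c d r N) Hlim) as [If [HIf1 HIf2]].
  assert (HC : CRInt (fun t => F (RtoC r * cis t) * Cconj (G (RtoC r * cis t)))%C 0 (2 * PI) = If).
  { unfold CRInt. destruct If as [x y].
    pose proof (is_RInt_C_fst g _ _ _ HIf2) as H1. pose proof (is_RInt_C_snd g _ _ _ HIf2) as H2.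
    apply (is_RInt_unique (V := R_CompleteNormedModule)) in H1. apply (is_RInt_unique (V := R_CompleteNormedModule)) in H2.
    transitivity (RInt (fun t => fst (g t)) 0 (2*PI), RInt (fun t => snd (g t)) 0 (2*PI)). reflexivity. rewrite H1, H2. reflexivity. }
  unfold inner_r. rewrite HC.
  apply (proj2 (Clim_filterlim _ _)) in HIf1.
  apply (Clim_scal (RtoC (/ (2 * PI)))) in HIf1.
  eapply Clim_ext; [|exact HIf1].
  exists O. intros n _. Ceq. rewrite Cmult_assoc, <- RtoC_mult, Rinv_l. ring.
  pose proof PI_RGT_0. lra.
Qed.

Definition disc_series (F : C -> C) (c : nat -> C) : Prop :=
  forall z, Cmod z < 1 -> Clim (sum_n (fun m => c m * z ^ m)%C) (F z).

Lemma term_small (a : nat -> C) l : Clim (sum_n a) l ->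
  exists N, forall m, (N <= m)%nat -> Cmod (a (S m)) < 1.
Proof.
  intros H. destruct (H (1/2)) as [N HN]; [lra|]. exists N. intros m Hm.
  replace (a (S m)) with (sum_n a (S m) - sum_n a m)%C by (rewrite sum_n_S_C; ring).
  eapply Rle_lt_trans. apply (Cmod_tri3 _ l).
  rewrite (Cmod_sub_sym l). specialize (HN (S m) ltac:(lia)) as H1. specialize (HN m Hm). lra.
Qed.

Lemma geom_bound q N : 0 <= q < 1 -> sum_f_R0 (fun i => q ^ i) N <= / (1 - q).
Proof.
  intros Hq. rewrite tech3 by lra. unfold Rdiv.
  pattern (/ (1 - q)) at 2; rewrite <- Rmult_1_l. apply Rmult_le_compat_r.
  apply Rlt_le, Rinv_0_lt_compat; lra. pose proof (pow_le q (S N) (proj1 Hq)). lra.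
Qed.

Lemma abs_conv F c : disc_series F c -> forall r, 0 <= r < 1 ->
  exists B, forall N, sum_f_R0 (fun m => Cmod (c m) * r ^ m) N <= B.
Proof.
  intros HF r Hr.
  set (rho := (1 + r) / 2).
  assert (Hrho : 0 < rho < 1) by (unfold rho; lra).
  assert (Hz : Cmod (RtoC rho) < 1) by (rewrite Cmod_RtoC_pos; lra).
  destruct (term_small _ _ (HF _ Hz)) as [N HN].
  set (K := 1 + sum_f_R0 (fun m => Cmod (c m) * rho ^ m) N).
  assert (Hnn : forall m, 0 <= Cmod (c m) * rho ^ m).
  { intros. apply Rmult_le_pos. apply Cmod_ge_0. apply pow_le; lra. }
  assert (HK : forall m, Cmod (c m) * rho ^ m <= K).
  { intros m. destruct (Nat.le_gt_cases m N).
    - pose proof (term_le_sum _ m N Hnn H). unfold K. lra.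
    - destruct m; [lia|]. specialize (HN m ltac:(lia)).
      rewrite Cmod_mult, Cmod_pow, Cmod_RtoC_pos in HN by lra.
      pose proof (sum_f_R0_nonneg _ N Hnn). unfold K. lra. }
  set (q := r / rho).
  assert (Hq : 0 <= q < 1).
  { unfold q. split. apply Rmult_le_pos; [lra|]. apply Rlt_le, Rinv_0_lt_compat; lra.
    apply Rmult_lt_reg_r with rho; [lra|]. unfold Rdiv. rewrite Rmult_assoc, Rinv_l by lra. unfold rho. lra. }
  exists (K * / (1 - q)). intros M.
  apply Rle_trans with (sum_f_R0 (fun m => K * q ^ m) M).
  { apply sum_Rle. intros m _. specialize (HK m).
    replace (r ^ m) with (rho ^ m * q ^ m).
    2:{ rewrite <- Rpow_mult_distr. unfold q. f_equal. field. lra. }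
    pose proof (pow_le q m (proj1 Hq)). rewrite <- Rmult_assoc. apply Rmult_le_compat_r; auto. }
  replace (sum_f_R0 (fun m => K * q ^ m) M) with (K * sum_f_R0 (fun m => q ^ m) M)
    by (rewrite scal_sum; apply sum_eq; intros; ring).
  apply Rmult_le_compat_l. unfold K. pose proof (sum_f_R0_nonneg _ N Hnn). lra.
  apply geom_bound; auto.
Qed.

Lemma bernoulli r k : 0 <= r <= 1 -> 1 - INR k * (1 - r) <= r ^ k.
Proof.
  intros Hr. induction k.
  - simpl. lra.
  - rewrite S_INR. simpl pow. pose proof (pos_INR k). assert (0 <= INR k * ((1 - r) * (1 - r))) by (apply Rmult_le_pos; nra). assert (r * (1 - INR k * (1 - r)) <= r * r ^ k) by (apply Rmult_le_compat_l; lra). nra.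
Qed.

Lemma sum_ind (a : nat -> R) K M :
  sum_f_R0 (fun m => if (K <? m)%nat then a m else 0) M = sum_f_R0 a (max M K) - sum_f_R0 a K.
Proof.
  induction M.
  - simpl. destruct (Nat.ltb_spec K 0); [lia|]. replace (max 0 K) with K by lia. ring.
  - rewrite tech5, IHM. destruct (Nat.ltb_spec K (S M)).
    + replace (max (S M) K) with (S M) by lia. replace (max M K) with M by lia. rewrite tech5. ring.
    + replace (max (S M) K) with K by lia. replace (max M K) with K by lia. ring.
Qed.

Lemma C_complete (u : nat -> C) B : (forall N, sum_f_R0 (fun m => Cmod (u m)) N <= B) ->
  exists S, Clim (sum_n u) S.
Proof.
  intros HB.
  destruct (real_series_lim (fun m => Cmod (u m)) B (fun m => Cmod_ge_0 _) HB) as [L [HL1 _]].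
  assert (Hex : ex_series (fun m => Cmod (u m))).
  { exists L. apply is_series_Reals. exact HL1. }
  destruct (ex_series_le (K := C_AbsRing) (V := C_CompleteNormedModule) u (fun m => Cmod (u m))
    (fun n => Rle_refl _) Hex) as [S HS].
  exists S. apply Clim_series. exact HS.
Qed.

Lemma Cmod_sum_n (a : nat -> C) M : Cmod (sum_n a M) <= sum_f_R0 (fun m => Cmod (a m)) M.
Proof.
  induction M.
  - rewrite sum_n_O_C. simpl. lra.
  - rewrite sum_n_S_C, tech5. eapply Rle_trans. apply Cmod_triangle. lra.
Qed.

Lemma sum_n_minus_C (a b : nat -> C) M : @eq C (sum_n a M - sum_n b M)%C (sum_n (fun m => a m - b m)%C M).
Proof.
  induction M.
  - rewrite !sum_n_O_C. reflexivity.
  - rewrite !sum_n_S_C. rewrite <- IHM. ring.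
Qed.

Lemma pow_decr r m N : 0 <= r <= 1 -> (m <= N)%nat -> r ^ N <= r ^ m.
Proof.
  intros Hr H. replace N with (m + (N - m))%nat by lia. rewrite pow_add.
  pose proof (pow_le r m (proj1 Hr)). pose proof (pow_le1 r (N - m) Hr). pose proof (pow_le r (N - m) (proj1 Hr)). nra.
Qed.

Lemma Csub0 (x : C) : (x - 0)%C = x.
Proof. ring. Qed.

Lemma hinner_eq (F G : C -> C) (c d : nat -> C) (B : R) :
  disc_series F c -> disc_series G d ->
  (forall N, sum_f_R0 (fun m => Cmod (c m) * Cmod (d m)) N <= B) ->
  Clim (sum_n (fun m => c m * Cconj (d m))%C) (hinner F G).
Proof.
  intros HF HG HB.
  set (u := fun m => (c m * Cconj (d m))%C).
  assert (Hu : forall m, Cmod (u m) = Cmod (c m) * Cmod (d m)).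
  { intros. unfold u. rewrite Cmod_mult, Cmod_conj. reflexivity. }
  set (a := fun m => Cmod (c m) * Cmod (d m)).
  assert (Ha : forall m, 0 <= a m).
  { intros. unfold a. apply Rmult_le_pos; apply Cmod_ge_0. }
  destruct (C_complete u B) as [S1 HS1].
  { intros N. eapply Rle_trans; [|apply (HB N)]. right. apply sum_eq. intros. apply Hu. }
  destruct (real_series_lim a B Ha HB) as [U [HU1 HU2]].
  assert (KEY : forall r, 0 <= r < 1 -> forall N,
     Cmod (inner_r F G r - S1) <= INR (2 * N) * (1 - r) * U + (U - sum_f_R0 a N)).
  { intros r Hr N.
    destruct (abs_conv F c HF r Hr) as [Bc HBc].
    destruct (abs_conv G d HG r Hr) as [Bd HBd].
    assert (Hz : forall t, Cmod (zc r t) < 1) by (intros; rewrite Cmod_zc; lra).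
    pose proof (parseval F G c d r Bc Bd (proj1 Hr) (fun t => HF _ (Hz t)) (fun t => HG _ (Hz t)) HBc HBd) as Hpar.
    pose proof (Clim_minus _ _ _ _ Hpar HS1) as Hdiff.
    replace (inner_r F G r - S1)%C with ((inner_r F G r - S1) - 0)%C by ring.
    apply (Clim_le _ _ _ _ Hdiff). exists N. intros M HM.
    rewrite sum_n_minus_C.
    rewrite Csub0.
    eapply Rle_trans. apply Cmod_sum_n.
    apply Rle_trans with (sum_f_R0 (fun m => a m * (1 - r ^ (2 * N)) + (if (N <? m)%nat then a m else 0)) M).
    { apply sum_Rle. intros m _.
      replace (c m * Cconj (d m) * RtoC (r ^ (2 * m)) - u m)%C with (u m * (RtoC (r ^ (2 * m)) - 1))%C by (unfold u; ring).
      rewrite Cmod_mult, Hu. fold (a m).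
      replace (RtoC (r ^ (2 * m)) - 1)%C with (RtoC (- (1 - r ^ (2 * m)))) by (apply injective_projections; simpl; ring).
      rewrite Cmod_R, Rabs_Ropp.
      assert (H0 : 0 <= r ^ (2 * m) <= 1) by (split; [apply pow_le; lra | apply pow_le1; lra]).
      rewrite Rabs_pos_eq by lra.
      assert (H1 : 0 <= r ^ (2 * N) <= 1) by (split; [apply pow_le; lra | apply pow_le1; lra]).
      pose proof (Ha m).
      destruct (Nat.ltb_spec N m).
      - nra.
      - assert (r ^ (2 * N) <= r ^ (2 * m)) by (apply pow_decr; lia || lra).
        nra. }
    rewrite sum_plus, sum_ind.
    rewrite <- scal_sum.
    assert (HB1 : 1 - r ^ (2 * N) <= INR (2 * N) * (1 - r)).
    { pose proof (bernoulli r (2 * N) ltac:(lra)). lra. }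
    assert (H1 : 0 <= 1 - r ^ (2 * N)) by (pose proof (pow_le1 r (2 * N) ltac:(lra)); lra).
    pose proof (HU2 M). pose proof (HU2 (max M N)). pose proof (sum_f_R0_nonneg a M Ha).
    assert ((1 - r ^ (2 * N)) * sum_f_R0 a M <= INR (2 * N) * (1 - r) * U).
    { apply Rle_trans with ((1 - r ^ (2 * N)) * U). apply Rmult_le_compat_l; lra.
      apply Rmult_le_compat_r. lra. lra. }
    lra. }
  assert (HL : filterlim (inner_r F G) (at_left 1) (locally (T := C_UniformSpace) S1)).
  { apply filterlim_locally. intros eps.
    destruct (HU1 (eps / 2)) as [N HN]. { pose proof (cond_pos eps). lra. }
    specialize (HN N (le_n N)). unfold R_dist in HN.
    rewrite Rabs_minus_sym, Rabs_pos_eq in HN by (pose proof (HU2 N); lra).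
    assert (HU0 : 0 <= U) by (pose proof (HU2 O); pose proof (Ha O); simpl in *; lra).
    set (k := INR (2 * N) * U + 1).
    assert (Hk : 0 < k) by (unfold k; pose proof (pos_INR (2 * N)); nra).
    assert (Hd : 0 < Rmin 1 (eps / (2 * k))).
    { apply Rmin_pos. lra. apply Rdiv_lt_0_compat. apply cond_pos. lra. }
    exists (mkposreal _ Hd). intros y Hy Hy1.
    change (Rabs (y - 1) < Rmin 1 (eps / (2 * k))) in Hy.
    rewrite Rabs_minus_sym, Rabs_pos_eq in Hy by lra.
    pose proof (Rmin_l 1 (eps / (2 * k))). pose proof (Rmin_r 1 (eps / (2 * k))).
    apply (norm_compat1 (V := C_NormedModule)).
    change (Cmod (inner_r F G y - S1) < eps).
    eapply Rle_lt_trans. apply (KEY y ltac:(lra) N).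
    assert (INR (2 * N) * (1 - y) * U <= k * (1 - y)).
    { unfold k. pose proof (pos_INR (2 * N)). nra. }
    assert (k * (1 - y) < k * (eps / (2 * k))) by (apply Rmult_lt_compat_l; lra).
    replace (k * (eps / (2 * k))) with (eps / 2) in H2 by (field; lra).
    lra. }
  assert (HH : hinner F G = S1).
  { unfold hinner.
    pose proof (epsilon_spec (inhabits (RtoC 0)) (fun l : C => filterlim (inner_r F G) (at_left 1) (locally l))
      (ex_intro _ S1 HL)) as He.
    apply (@filterlim_locally_unique _ C_AbsRing C_NormedModule (at_left 1)
      (Proper_StrongProper _ (at_left_proper_filter 1)) (inner_r F G)); auto. }
  rewrite HH. exact HS1.
Qed.

Lemma lim_arg (P M : R) N : 0 <= P -> (forall r, 0 <= r < 1 -> r ^ (2 * N) * P <= M) -> P <= M.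
Proof.
  intros HP H. apply Rnot_gt_le. intro Hc.
  set (k := INR (2 * N) * P + 1).
  assert (Hk : 0 < k) by (unfold k; pose proof (pos_INR (2 * N)); nra).
  set (dl := Rmin (1/2) ((P - M) / (2 * k))).
  assert (Hd1 : dl <= 1/2) by apply Rmin_l.
  assert (Hd2 : dl <= (P - M) / (2 * k)) by apply Rmin_r.
  assert (Hd0 : 0 < dl) by (apply Rmin_pos; [lra| apply Rdiv_lt_0_compat; lra]).
  specialize (H (1 - dl) ltac:(lra)).
  pose proof (bernoulli (1 - dl) (2 * N) ltac:(lra)).
  assert (H1 : (1 - INR (2 * N) * (1 - (1 - dl))) * P <= (1 - dl) ^ (2 * N) * P) by (apply Rmult_le_compat_r; lra).
  assert (H2 : INR (2 * N) * dl * P <= k * dl) by (unfold k; pose proof (pos_INR (2 * N)); nra).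
  assert (H3 : k * dl <= k * ((P - M) / (2 * k))) by (apply Rmult_le_compat_l; lra).
  replace (k * ((P - M) / (2 * k))) with ((P - M) / 2) in H3 by (field; lra).
  nra.
Qed.

Lemma holo_series f c : (forall z : C, Cmod z < 1 -> is_series (fun n => (c n * z ^ n)%C) (f z)) -> disc_series f c.
Proof. intros H z Hz. apply Clim_series. apply H. auto. Qed.

Lemma fst_RtoC_mult (a : R) (z : C) : fst (RtoC a * z)%C = a * fst z.
Proof. destruct z. simpl. ring. Qed.

Lemma H2_sq f : H2 f -> exists c, disc_series f c /\ exists B, forall N, sum_f_R0 (fun m => Cmod (c m) ^ 2) N <= B.
Proof.
  intros [[c Hc] [M HM]]. exists c. pose proof (holo_series f c Hc) as HF. split; auto.
  exists M. intros N. apply (lim_arg _ _ N). apply sum_f_R0_nonneg. intros; apply pow2_ge_0.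
  intros r Hr.
  destruct (abs_conv f c HF r Hr) as [Bc HBc].
  assert (Hz : forall t, Cmod (zc r t) < 1) by (intros; rewrite Cmod_zc; lra).
  pose proof (parseval f f c c r Bc Bc (proj1 Hr) (fun t => HF _ (Hz t)) (fun t => HF _ (Hz t)) HBc HBc) as Hpar.
  apply Clim_fst in Hpar.
  assert (Hle : sum_f_R0 (fun m => Cmod (c m) ^ 2 * r ^ (2 * m)) N <= fst (inner_r f f r)).
  { apply growing_ineq.
    - intros n. rewrite tech5. pose proof (pow2_ge_0 (Cmod (c (S n)))). pose proof (pow_le r (2 * S n) (proj1 Hr)).
      assert (0 <= Cmod (c (S n)) ^ 2 * r ^ (2 * S n)) by (apply Rmult_le_pos; auto). lra.
    - refine (Un_cv_ext _ _ _ _ Hpar). intros n. rewrite fst_sum_n. apply sum_eq. intros m _.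
      rewrite <- Cmod2_conj, <- RtoC_mult. reflexivity. }
  assert (Hin : fst (inner_r f f r) <= M).
  { unfold inner_r. rewrite fst_RtoC_mult. unfold CRInt. simpl fst.
    specialize (HM r Hr). eapply Rle_trans; [|exact HM]. right. f_equal.
    apply RInt_ext. intros t _. pose proof (f_equal fst (Cmod2_conj (f (RtoC r * cis t)%C))) as E. simpl in E. lra. }
  eapply Rle_trans; [|exact Hin]. eapply Rle_trans; [|exact Hle].
  rewrite scal_sum. apply sum_Rle. intros m Hm.
  apply Rmult_le_compat_l. apply pow2_ge_0.
  apply pow_decr. lra. lia.
Qed.

Lemma sum_scal_l (k : R) (g : nat -> R) M : sum_f_R0 (fun m => k * g m) M = k * sum_f_R0 g M.
Proof. rewrite scal_sum. apply sum_eq. intros; ring. Qed.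

Lemma Cmod_sq_fst (w : C) : fst (w * Cconj w)%C = Cmod w ^ 2.
Proof. rewrite <- Cmod2_conj. reflexivity. Qed.

Lemma knorm n a : Cmod a < 1 ->
  exists D, hnorm (k_na n a) = D /\ 0 < D /\
    forall M, sum_f_R0 (fun m => Cmod (dcoef n a m) ^ 2) M <= D ^ 2.
Proof.
  intros Ha.
  pose proof (kser n a Ha) as Hk. fold (disc_series (k_na n a) (dcoef n a)) in Hk.
  destruct (d_sq_bound n a Ha) as [Bd HBd].
  assert (Hkk := hinner_eq (k_na n a) (k_na n a) (dcoef n a) (dcoef n a) Bd Hk Hk
    ltac:(intros N; eapply Rle_trans; [|apply (HBd N)]; right; apply sum_eq; intros; simpl; ring)).
  apply Clim_fst in Hkk.
  set (Sd := fst (hinner (k_na n a) (k_na n a))) in Hkk.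
  assert (HS : forall M, sum_f_R0 (fun m => Cmod (dcoef n a m) ^ 2) M <= Sd).
  { apply growing_ineq.
    - intros M. rewrite tech5. pose proof (pow2_ge_0 (Cmod (dcoef n a (S M)))). lra.
    - refine (Un_cv_ext _ _ _ _ Hkk). intros M. rewrite fst_sum_n. apply sum_eq. intros. apply Cmod_sq_fst. }
  assert (HSd : 1 <= Sd).
  { eapply Rle_trans; [|apply (HS n)].
    eapply Rle_trans; [|apply (term_le_sum (fun m => Cmod (dcoef n a m) ^ 2) n n (fun j => pow2_ge_0 _) (le_n n))].
    simpl. rewrite dcoef_n, Cmod_RtoC_pos by apply pos_INR.
    pose proof (INR_fact_lt_0 n). assert (1 <= INR (fact n)).
    { replace 1 with (INR 1) by reflexivity. apply le_INR. pose proof (lt_O_fact n). lia. }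
    nra. }
  exists (sqrt Sd). split; [reflexivity|]. split.
  apply sqrt_lt_R0. lra.
  intros M. rewrite pow2_sqrt by lra. apply HS.
Qed.

Lemma ec_series n a D : Cmod a < 1 -> hnorm (k_na n a) = D -> 0 < D ->
  disc_series (e_na n a) (fun m => dcoef n a m * RtoC (/ D))%C.
Proof.
  intros Ha HD HD0 z Hz.
  pose proof (Clim_scal (RtoC (/ D)) _ _ (kser n a Ha z Hz)) as H.
  eapply Clim_ext; [|].
  2:{ replace (e_na n a z) with (RtoC (/ D) * k_na n a z)%C. exact H.
      unfold e_na, Cdiv. rewrite HD. rewrite RtoC_inv by lra. ring. }
  exists O. intros N _. rewrite <- sum_n_Cscal. apply sum_n_ext. intros m. Ceq. ring.
Qed.

Theorem lemma2 (f : C -> C) (Hf : H2 f) :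
  forall eps : R, 0 < eps ->
  exists N : nat, forall (n : nat) (a : C),
    (N < n)%nat -> Cmod a < 1 -> Cmod (hinner f (e_na n a)) < eps.
Proof.
  intros eps Heps.
  destruct (H2_sq f Hf) as [c [HF [Bc HBc]]].
  set (a2 := fun m => Cmod (c m) ^ 2).
  assert (Ha2 : forall m, 0 <= a2 m) by (intros; apply pow2_ge_0).
  destruct (real_series_lim a2 Bc Ha2 HBc) as [L2 [HL1 HL2]].
  destruct (HL1 (eps * eps / 8)) as [N0 HN0]. { nra. }
  exists N0. intros n a Hn Ha.
  destruct (knorm n a Ha) as [D [HD [HD0 HDs]]].
  set (ec := fun m => (dcoef n a m * RtoC (/ D))%C).
  assert (Hec : forall m, Cmod (ec m) = Cmod (dcoef n a m) / D).
  { intros. unfold ec. rewrite Cmod_mult, Cmod_RtoC_pos. reflexivity. apply Rlt_le, Rinv_0_lt_compat; lra. }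
  assert (Hec1 : forall M, sum_f_R0 (fun m => Cmod (ec m) ^ 2) M <= 1).
  { intros M. apply Rle_trans with (/ D ^ 2 * sum_f_R0 (fun m => Cmod (dcoef n a m) ^ 2) M).
    - rewrite <- sum_scal_l. right. apply sum_eq. intros m _. rewrite Hec. field. lra.
    - specialize (HDs M). apply Rmult_le_reg_l with (D ^ 2). nra.
      rewrite <- Rmult_assoc, Rinv_r by nra. lra. }
  assert (Hec0 : forall m, (m < n)%nat -> Cmod (ec m) = 0).
  { intros m Hm. rewrite Hec. unfold dcoef, shiftC. destruct (Nat.ltb_spec m n); [|lia].
    rewrite Cmod_0. unfold Rdiv. ring. }
  pose proof (ec_series n a D Ha HD HD0) as HE. fold ec in HE.
  assert (Hbd : forall N, sum_f_R0 (fun m => Cmod (c m) * Cmod (ec m)) N <= (Bc + 1) / 2).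
  { intros N. apply Rle_trans with (sum_f_R0 (fun m => / 2 * (a2 m + Cmod (ec m) ^ 2)) N).
    - apply sum_Rle. intros m _. unfold a2. pose proof (pow2_ge_0 (Cmod (c m) - Cmod (ec m))). nra.
    - rewrite sum_scal_l, sum_plus. pose proof (HBc N). pose proof (Hec1 N). replace ((Bc + 1) / 2) with (/ 2 * (Bc + 1)) by field. apply Rmult_le_compat_l. lra. unfold a2 in *. lra. }
  pose proof (hinner_eq f (e_na n a) c ec ((Bc + 1) / 2) HF HE Hbd) as Hfe.
  replace (hinner f (e_na n a)) with (hinner f (e_na n a) - 0)%C by apply Csub0.
  apply Rle_lt_trans with (eps / 16 + eps / 2); [|lra].
  apply (Clim_le _ _ _ _ Hfe). exists O. intros M _. rewrite Csub0.
  eapply Rle_trans. apply Cmod_sum_n.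
  apply Rle_trans with (sum_f_R0 (fun m => / (2 * eps) * (if (pred n <? m)%nat then a2 m else 0) + eps / 2 * Cmod (ec m) ^ 2) M).
  { apply sum_Rle. intros m _. rewrite Cmod_mult, Cmod_conj.
    destruct (Nat.ltb_spec (pred n) m).
    - unfold a2. pose proof (pow2_ge_0 (Cmod (c m) - eps * Cmod (ec m))).
      apply Rmult_le_reg_l with (2 * eps). lra.
      replace (2 * eps * (/ (2 * eps) * Cmod (c m) ^ 2 + eps / 2 * Cmod (ec m) ^ 2))
        with (Cmod (c m) ^ 2 + eps * eps * Cmod (ec m) ^ 2) by (field; lra).
      nra.
    - rewrite Hec0 by lia. rewrite Rmult_0_r. pose proof (pow2_ge_0 (Cmod (ec m))). nra. }
  rewrite sum_plus, sum_scal_l, sum_scal_l, sum_ind.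
  pose proof (Hec1 M).
  specialize (HN0 (pred n) ltac:(lia)). unfold R_dist in HN0.
  rewrite Rabs_minus_sym, Rabs_pos_eq in HN0 by (pose proof (HL2 (pred n)); lra).
  pose proof (HL2 (max M (pred n))).
  assert (H1 : sum_f_R0 a2 (max M (pred n)) - sum_f_R0 a2 (pred n) <= eps * eps / 8) by lra.
  assert (H2 : / (2 * eps) * (sum_f_R0 a2 (max M (pred n)) - sum_f_R0 a2 (pred n)) <= / (2 * eps) * (eps * eps / 8)).
  { apply Rmult_le_compat_l; auto. apply Rlt_le, Rinv_0_lt_compat; lra. }
  replace (/ (2 * eps) * (eps * eps / 8)) with (eps / 16) in H2 by (field; lra).
  assert (eps / 2 * sum_f_R0 (fun m => Cmod (ec m) ^ 2) M <= eps / 2) by (apply Rle_trans with (eps / 2 * 1); [apply Rmult_le_compat_l; lra | lra]).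
  lra.
Qed.
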